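(* Let $O$ be the closed disk of radius $R>0$ centered at the origin. Consider three pupils $P_1,P_2,P_3$, where $P_i$ is the closed disk of center $c_i\in\mathbb{R}^2$ and radius $\rho_i\ge0$ (radius $0$ meaning the single point $c_i$). Call the configuration valid if $O\subseteq\bigcup_{i,j=1}^3 D_{ij}$, where $D_{ij}$ is the closed disk of center $c_i-c_j$ and radius $\rho_i+\rho_j$. Then, among valid configurations, those in which one radius equals $R/2$ and the other two are $0$ (with arbitrary centers) minimize $\rho_1+\rho_2+\rho_3$; that is, every such configuration is valid, and every valid configuration satisfies $\rho_1+\rho_2+\rho_3\ge R/2$.
   Context: $D_{ij}=P_i\ominus P_j=\{a-b\mid a\in P_i,b\in P_j\}$ (Minkowski difference); $\bigcup_{i,j}D_{ij}$ is the auto-correlation support of the pupils. *)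

(* Defs.v *)
From Stdlib Require Import Reals Lra.
Open Scope R_scope.

Definition pt := (R * R)%type.

Definition in_disk (c : pt) (r : R) (p : pt) : Prop :=
  (fst p - fst c)^2 + (snd p - snd c)^2 <= r^2.

(* Three pupils indexed by i in {0,1,2}; centers c i, radii rho i. *)
Definition in_D (c : nat -> pt) (rho : nat -> R) (i j : nat) (p : pt) : Prop :=
  in_disk (fst (c i) - fst (c j), snd (c i) - snd (c j)) (rho i + rho j) p.

Definition valid (Rad : R) (c : nat -> pt) (rho : nat -> R) : Prop :=
  forall p : pt, in_disk (0, 0) Rad p ->
    exists i j, (i < 3)%nat /\ (j < 3)%nat /\ in_D c rho i j p.

(* Main.v *)
Require Import Defs.
From Stdlib Require Import Reals Lra Lia Psatz Arith.
Open Scope R_scope.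
Definition cyc (j l : nat) : nat := Nat.min (Nat.sub (Nat.max j l) (Nat.min j l)) (Nat.sub 24 (Nat.sub (Nat.max j l) (Nat.min j l))).

Lemma cos_red (dl : nat) : (dl <= 24)%nat ->
  cos (INR dl * PI / 12) = cos (INR (Nat.min dl (24 - dl)) * PI / 12).
Proof.
  intros H. destruct (Nat.le_ge_cases dl (24 - dl)) as [h|h].
  - rewrite Nat.min_l by exact h. reflexivity.
  - rewrite Nat.min_r by exact h. rewrite minus_INR by exact H.
    replace ((INR 24 - INR dl) * PI / 12) with (- (INR dl * PI / 12) + 2 * INR 1 * PI).
    + rewrite cos_period, cos_neg. reflexivity.
    + simpl. field.
Qed.

Lemma cos_cyc (j l : nat) : (j < 24)%nat -> (l < 24)%nat ->
  cos ((INR j - INR l) * PI / 12) = cos (INR (cyc j l) * PI / 12).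
Proof.
  intros hj hl. unfold cyc.
  destruct (Nat.le_ge_cases l j) as [h|h].
  - rewrite (Nat.max_l j l h), (Nat.min_r j l h).
    rewrite <- cos_red by lia. rewrite minus_INR by exact h. reflexivity.
  - rewrite (Nat.max_r j l h), (Nat.min_l j l h).
    rewrite <- cos_red by lia. rewrite minus_INR by exact h.
    rewrite <- cos_neg. f_equal. field.
Qed.

Lemma cyc_le12 j l : (cyc j l <= 12)%nat.
Proof. unfold cyc. lia. Qed.

Lemma sqrt3_b : 1.732 < sqrt 3 < 1.7321.
Proof.
  assert (h := sqrt_lt_R0 3 ltac:(lra)). assert (h2 := sqrt_sqrt 3 ltac:(lra)).
  split; nra.
Qed.

Lemma cos_mono (x y : R) : 0 <= x -> x <= y -> y <= PI -> cos y <= cos x.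
Proof.
  intros. destruct (Req_dec x y) as [->|ne]. lra.
  apply Rlt_le, cos_decreasing_1; lra.
Qed.

Lemma cos1 : cos (PI / 12) <= 281/289.
Proof.
  assert (h := cos_2a_cos (PI/12)). replace (2 * (PI/12)) with (PI/6) in h by field.
  rewrite cos_PI6 in h. assert (s := sqrt3_b). nra.
Qed.
Lemma cos2 : cos (2 * PI / 12) <= 257/289.
Proof. replace (2 * PI / 12) with (PI/6) by field. rewrite cos_PI6. assert (s := sqrt3_b). lra. Qed.
Lemma cos3 : cos (3 * PI / 12) <= 217/289.
Proof. replace (3 * PI / 12) with (PI/4) by field. rewrite cos_PI4.
  assert (h := sqrt_lt_R0 2 ltac:(lra)). assert (h2 := sqrt_sqrt 2 ltac:(lra)).
  apply Rmult_le_reg_r with (sqrt 2). lra. field_simplify; nra. Qed.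
Lemma cos4 : cos (4 * PI / 12) <= 161/289.
Proof. replace (4 * PI / 12) with (PI/3) by field. rewrite cos_PI3. lra. Qed.
Lemma cos5 : cos (5 * PI / 12) < 1/2.
Proof.
  assert (h := cos_2a_cos (5 * PI/12)). replace (2 * (5 * PI/12)) with (PI - PI/6) in h by field.
  replace (PI - PI/6) with (- (PI/6) + PI) in h by ring. rewrite neg_cos, cos_neg, cos_PI6 in h. assert (s := sqrt3_b). nra.
Qed.

Lemma cosk (k : nat) (r : R) : (1 <= k <= 12)%nat -> 0 <= r -> (k <= 4)%nat -> r < 2 * INR k / 17 ->
  4 * r^2 < 2 - 2 * cos (INR k * PI / 12).
Proof.
  intros hk hr h4 hb. assert (hp := PI_RGT_0).
  destruct k as [|[|[|[|[|k]]]]]; try lia; simpl in hb |- *.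
  - assert (c := cos1). replace (1 * PI / 12) with (PI/12) by field. nra.
  - assert (c := cos2). replace ((1+1) * PI / 12) with (2 * PI/12) by field. nra.
  - assert (c := cos3). replace ((1+1+1) * PI / 12) with (3 * PI/12) by field. nra.
  - assert (c := cos4). replace ((1+1+1+1) * PI / 12) with (4 * PI/12) by field. nra.
Qed.

Lemma cosbig (k : nat) (r : R) : (5 <= k <= 12)%nat -> 0 <= r -> r < 1/2 ->
  4 * r^2 < 2 - 2 * cos (INR k * PI / 12).
Proof.
  intros hk hr hb. assert (hp := PI_RGT_0).
  assert (cos (INR k * PI / 12) <= cos (5 * PI / 12)).
  { apply cos_mono. lra.
    - apply Rmult_le_compat_r. lra. apply Rmult_le_compat_r. lra.
      replace 5 with (INR 5) by (simpl; lra). apply le_INR. lia.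
    - assert (INR k <= 12). { replace 12 with (INR 12) by (simpl; lra). apply le_INR; lia. }
      nra. }
  assert (c := cos5). nra.
Qed.

Definition qp (Rad : R) (j : nat) : pt := (Rad * cos (INR j * PI / 12), Rad * sin (INR j * PI / 12)).

Lemma chord Rad j l : (j < 24)%nat -> (l < 24)%nat ->
  (fst (qp Rad j) - fst (qp Rad l))^2 + (snd (qp Rad j) - snd (qp Rad l))^2
  = Rad^2 * (2 - 2 * cos (INR (cyc j l) * PI / 12)).
Proof.
  intros hj hl. rewrite <- cos_cyc by assumption.
  replace ((INR j - INR l) * PI / 12) with (INR j * PI / 12 - INR l * PI / 12) by field.
  rewrite cos_minus. unfold qp; simpl.
  assert (e1 := sin2_cos2 (INR j * PI / 12)). assert (e2 := sin2_cos2 (INR l * PI / 12)).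
  unfold Rsqr in *. nra.
Qed.

Lemma qp_norm Rad j : (fst (qp Rad j) - 0)^2 + (snd (qp Rad j) - 0)^2 = Rad^2.
Proof.
  unfold qp; simpl. assert (e1 := sin2_cos2 (INR j * PI / 12)). unfold Rsqr in *. nra.
Qed.

Lemma par (z : pt) b p1 p2 : in_disk z b p1 -> in_disk z b p2 ->
  (fst p1 - fst p2)^2 + (snd p1 - snd p2)^2 <= 4 * b^2.
Proof.
  destruct z as [z1 z2], p1 as [x1 y1], p2 as [x2 y2]. unfold in_disk; simpl. intros h1 h2.
  assert (0 <= (x1 + x2 - 2 * z1)^2 + (y1 + y2 - 2 * z2)^2)
    by (apply Rplus_le_le_0_compat; apply pow2_ge_0).
  nra.
Qed.

Definition dfun (x : R) : nat :=
  if Rlt_dec x (2/17) then 0%nat else if Rlt_dec x (4/17) then 1%nat else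
  if Rlt_dec x (6/17) then 2%nat else if Rlt_dec x (8/17) then 3%nat else 4%nat.

Lemma dfun_le4 x : (dfun x <= 4)%nat.
Proof. unfold dfun. repeat destruct Rlt_dec; lia. Qed.

Lemma dfun_INR x : 0 <= x -> INR (dfun x) <= 17/2 * x.
Proof. intros h. unfold dfun. repeat destruct Rlt_dec; simpl; lra. Qed.

Lemma dfun_lt x k : (dfun x < k)%nat -> (k <= 4)%nat -> x < 2 * INR k / 17.
Proof.
  intros h h4. unfold dfun in h.
  destruct k as [|[|[|[|[|k]]]]]; try lia; simpl;
  repeat destruct Rlt_dec; try lia; lra.
Qed.

Lemma key Rad b i j : 0 < Rad -> 0 <= b -> b < Rad / 2 -> (i < 24)%nat -> (j < 24)%nat ->
  (dfun (b / Rad) < cyc i j)%nat ->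
  4 * b^2 < (fst (qp Rad i) - fst (qp Rad j))^2 + (snd (qp Rad i) - snd (qp Rad j))^2.
Proof.
  intros hR hb hb2 hi hj hlt. rewrite chord by assumption.
  assert (hx : 0 <= b / Rad) by (apply Rmult_le_pos; [lra| left; apply Rinv_0_lt_compat; lra]).
  assert (hx2 : b / Rad < 1/2) by (apply Rmult_lt_reg_r with Rad; [lra|]; field_simplify; lra).
  assert (hc : 4 * (b / Rad)^2 < 2 - 2 * cos (INR (cyc i j) * PI / 12)).
  { assert (h12 := cyc_le12 i j).
    destruct (Nat.le_gt_cases (cyc i j) 4) as [h|h].
    - apply cosk; try lia; auto. apply dfun_lt; assumption.
    - apply cosbig; try lia; auto. }
  assert (e : 4 * b^2 = Rad^2 * (4 * (b / Rad)^2)) by (field; lra).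
  rewrite e. apply Rmult_lt_compat_l; [nra | exact hc].
Qed.

Lemma not_diag Rad z r j : 0 < Rad -> fst z = 0 -> snd z = 0 -> 0 <= r < Rad ->
  ~ in_disk z r (qp Rad j).
Proof.
  intros hR h1 h2 hr. unfold in_disk. rewrite h1, h2, qp_norm. nra.
Qed.

Definition inDb (z : pt) (r : R) (p : pt) : bool :=
  if Rle_dec ((fst p - fst z)^2 + (snd p - snd z)^2) (r^2) then true else false.

Lemma inDbP z r p : inDb z r p = true <-> in_disk z r p.
Proof. unfold inDb, in_disk. destruct Rle_dec; split; intros; congruence || contradiction. Qed.

Open Scope nat_scope.
Definition near (j l d : nat) : Prop := j <= l + d /\ l <= j + d.
Definition rot12 (j : nat) : nat := if Nat.ltb j 12 then j + 12 else j - 12.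
Definition cl (j l d : nat) : Prop := (j <= l + d /\ l <= j + d) \/ j + 24 <= l + d \/ l + 24 <= j + d.

Lemma cyc_cl j l d : j < 24 -> l < 24 -> cyc j l <= d -> cl j l d.
Proof.
  unfold cyc, cl. intros hj hl h.
  destruct (Nat.le_ge_cases j l) as [e|e].
  - rewrite (Nat.max_r j l e), (Nat.min_l j l e) in h.
    destruct (Nat.le_ge_cases (l - j) (24 - (l - j))) as [f|f].
    + rewrite (Nat.min_l _ _ f) in h. lia.
    + rewrite (Nat.min_r _ _ f) in h. lia.
  - rewrite (Nat.max_l j l e), (Nat.min_r j l e) in h.
    destruct (Nat.le_ge_cases (j - l) (24 - (j - l))) as [f|f].
    + rewrite (Nat.min_l _ _ f) in h. lia.
    + rewrite (Nat.min_r _ _ f) in h. lia.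
Qed.

Lemma rot12_spec j : (j < 12 /\ rot12 j = j + 12) \/ (12 <= j /\ rot12 j = j - 12).
Proof. unfold rot12. destruct (Nat.ltb_spec j 12); [left|right]; split; auto. Qed.

Lemma rot12_inj j l : j < 24 -> l < 24 -> rot12 j = rot12 l -> j = l.
Proof. intros. destruct (rot12_spec j) as [[? ?]|[? ?]]; destruct (rot12_spec l) as [[? ?]|[? ?]]; lia. Qed.

Lemma L3 x y j l d : x < 24 -> y < 24 -> j < 24 -> l < 24 -> d <= 4 ->
  cl j l d -> cl x j d -> cl x l d -> cl y j d -> cl y l d -> cl x y d -> ~ near j l d ->
  near (rot12 x) (rot12 y) d.
Proof.
  unfold near. intros hx hy hj hl hd h0 h1 h2 h3 h4 h5 hn.
  destruct (rot12_spec x) as [[? ->]|[? ->]]; destruct (rot12_spec y) as [[? ->]|[? ->]];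
  unfold cl in *; lia.
Qed.

Open Scope R_scope.

From mathcomp Require ssreflect ssrbool ssrfun eqtype ssrnat seq choice fintype finset.
Module MC.
Import ssreflect ssrbool ssrfun eqtype ssrnat seq choice fintype finset.
Open Scope R_scope.

Lemma lin1 (S : {set 'I_24}) (f : 'I_24 -> nat) d : {in S &, injective f} ->
  (forall x y, x \in S -> y \in S -> (f x <= f y + d)%N) -> (#|S| <= d.+1)%N.
Proof.
move=> finj hf.
case: (set_0Vmem S) => [->|[i0 hi0]]; first by rewrite cards0.
pose k0 := [arg min_(k < i0 in S) f k].
have [hk0S hk0m] : k0 \in S /\ forall j, j \in S -> (f k0 <= f j)%N.
  by rewrite /k0; case: arg_minnP.
pose h (j : 'I_24) : 'I_d.+1 := inord (f j - f k0).
have hle : forall j, j \in S -> (f j - f k0 <= d)%N.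
  by move=> j hj; rewrite leq_subLR; exact: hf.
have hinj : {in S &, injective h}.
  move=> j l hj hl /(congr1 val); rewrite /h /= !inordK; try by rewrite ltnS hle.
  move=> e; apply: finj => //. by rewrite -(subnK (hk0m _ hj)) e subnK // hk0m.
rewrite -(card_in_imset hinj).
by apply: leq_trans (max_card _) _; rewrite card_ord.
Qed.

Lemma comb (d : nat) (S : {set 'I_24}) : (d <= 4)%N ->
  (forall i j : 'I_24, i \in S -> j \in S -> (cyc i j <= d)%coq_nat) -> (#|S| <= d.+1)%N.
Proof.
move=> hd hS.
have hcl : forall i j : 'I_24, i \in S -> j \in S -> cl i j d.
  by move=> i j hi hj; apply: cyc_cl; [apply/ltP | apply/ltP | apply: hS].
case: (boolP [exists j in S, exists l in S, ~~ ((j <= l + d) && (l <= j + d))%N]).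
- move/existsP => [j /andP [hj /existsP [l /andP [hl hn]]]].
  have nn : ~ near j l d.
    move=> [a b]. move/negP: hn; apply. apply/andP; split; apply/leP; [exact a | exact b].
  apply: (lin1 S (fun x : 'I_24 => rot12 x) d).
    move=> x y hx hy e; apply: val_inj; exact: (rot12_inj x y (ltP (ltn_ord x)) (ltP (ltn_ord y)) e).
  move=> x y hx hy.
  have := L3 x y j l d (ltP (ltn_ord x)) (ltP (ltn_ord y)) (ltP (ltn_ord j)) (ltP (ltn_ord l))
    (leP hd) (hcl _ _ hj hl) (hcl _ _ hx hj) (hcl _ _ hx hl) (hcl _ _ hy hj) (hcl _ _ hy hl)
    (hcl _ _ hx hy) nn.
  by move=> [a _]; apply/leP.
- move=> H. apply: (lin1 _ (fun x : 'I_24 => nat_of_ord x)).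
    by move=> x y _ _; apply: val_inj.
  move=> x y hx hy.
  case: (boolP ((x <= y + d) && (y <= x + d))%N) => [/andP[]//|hn].
  exfalso; move/negP: H; apply; apply/existsP; exists x; rewrite hx /=.
  by apply/existsP; exists y; rewrite hy hn.
Qed.

Definition Sset Rad z r : {set 'I_24} := [set j : 'I_24 | inDb z r (qp Rad j)].

Lemma card_off Rad z b : 0 < Rad -> 0 <= b -> b < Rad / 2 ->
  (#|Sset Rad z b| <= (dfun (b / Rad)).+1)%N.
Proof.
  move=> hR hb hb2. apply: comb; first by apply/leP; exact: dfun_le4.
  move=> i j; rewrite !inE => /inDbP hi /inDbP hj.
  case: (Nat.le_gt_cases (cyc i j) (dfun (b / Rad))) => // h; exfalso.
  have h1 := par _ _ _ _ hi hj.
  have h2 := key Rad b i j hR hb hb2 (ltP (ltn_ord i)) (ltP (ltn_ord j)) h.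
  lra.
Qed.

Lemma card_diag Rad z r : 0 < Rad -> fst z = 0 -> snd z = 0 -> 0 <= r < Rad ->
  #|Sset Rad z r| = 0%N.
Proof.
  move=> hR h1 h2 hr. apply/eqP; rewrite cards_eq0; apply/eqP/setP => j.
  rewrite !inE. case e: (inDb z r (qp Rad j)) => //.
  exfalso. exact: (not_diag Rad z r j hR h1 h2 hr (proj1 (inDbP _ _ _) e)).
Qed.

Lemma cardU_le (T : finType) (A B : {set T}) : (#|A :|: B| <= #|A| + #|B|)%N.
Proof. by rewrite cardsU leq_subr. Qed.

Lemma part2 (Rad : R) (hR : 0 < Rad) : forall (c : nat -> pt) (rho : nat -> R),
     (forall i, (i < 3)%coq_nat -> 0 <= rho i) ->
     valid Rad c rho ->
     rho 0%N + rho 1%N + rho 2%N >= Rad / 2.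
Proof.
intros c rho hpos hv. apply Rnot_lt_ge => hs.
have h0 := hpos 0%nat ltac:(lia). have h1 := hpos 1%nat ltac:(lia).
have h2 := hpos 2%nat ltac:(lia).
pose ctr (i i' : nat) : pt := (fst (c i) - fst (c i'), snd (c i) - snd (c i')).
pose S (i i' : nat) := Sset Rad (ctr i i') (rho i + rho i').
have cover : [set: 'I_24] \subset S 0%N 0%N :|: S 0%N 1%N :|: S 0%N 2%N :|: S 1%N 0%N :|: S 1%N 1%N
    :|: S 1%N 2%N :|: S 2%N 0%N :|: S 2%N 1%N :|: S 2%N 2%N.
  apply/subsetP => j _.
  have hn : in_disk (0, 0) Rad (qp Rad j).
    by unfold in_disk; rewrite qp_norm; lra.
  have [i [i' [hi [hi' hD]]]] := hv (qp Rad j) hn.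
  have hb : inDb (ctr i i') (rho i + rho i') (qp Rad j) = true := proj2 (inDbP _ _ _) hD.
  destruct i as [|[|[|i]]]; try lia; destruct i' as [|[|[|i']]]; try lia;
    by rewrite /S /Sset !inE hb ?orbT.
have hcard := subset_leq_card cover. rewrite cardsT card_ord in hcard.
have hU : (#|S 0%N 0%N :|: S 0%N 1%N :|: S 0%N 2%N :|: S 1%N 0%N :|: S 1%N 1%N
    :|: S 1%N 2%N :|: S 2%N 0%N :|: S 2%N 1%N :|: S 2%N 2%N| <=
    #|S 0%N 0%N| + #|S 0%N 1%N| + #|S 0%N 2%N| + #|S 1%N 0%N| + #|S 1%N 1%N|
    + #|S 1%N 2%N| + #|S 2%N 0%N| + #|S 2%N 1%N| + #|S 2%N 2%N|)%N.
  by do 8! (apply: (leq_trans (cardU_le _ _ _)); rewrite leq_add2r).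
have dg : forall i, (i < 3)%coq_nat -> #|S i i| = 0%N.
  move=> i hi. have := hpos i hi => hp.
  apply: card_diag => //=; try ring. split; first lra.
  destruct i as [|[|[|i]]]; try lia; lra.
have od : forall i i', (i < 3)%coq_nat -> (i' < 3)%coq_nat -> (i <> i') ->
   (#|S i i'| <= (dfun ((rho i + rho i') / Rad)).+1)%N.
  move=> i i' hi hi' ne. have := hpos i hi => hp. have := hpos i' hi' => hp'.
  apply: card_off => //; first lra.
  destruct i as [|[|[|i]]]; try lia; destruct i' as [|[|[|i']]]; try lia; lra.
have e00 := dg 0%nat ltac:(lia). have e11 := dg 1%nat ltac:(lia).
have e22 := dg 2%nat ltac:(lia).
have o01 := od 0%nat 1%nat ltac:(lia) ltac:(lia) ltac:(lia).
have o02 := od 0%nat 2%nat ltac:(lia) ltac:(lia) ltac:(lia).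
have o10 := od 1%nat 0%nat ltac:(lia) ltac:(lia) ltac:(lia).
have o12 := od 1%nat 2%nat ltac:(lia) ltac:(lia) ltac:(lia).
have o20 := od 2%nat 0%nat ltac:(lia) ltac:(lia) ltac:(lia).
have o21 := od 2%nat 1%nat ltac:(lia) ltac:(lia) ltac:(lia).
have Hs : (#|S 0%N 0%N| + #|S 0%N 1%N| + #|S 0%N 2%N| + #|S 1%N 0%N| + #|S 1%N 1%N|
  + #|S 1%N 2%N| + #|S 2%N 0%N| + #|S 2%N 1%N| + #|S 2%N 2%N| <=
  0 + (dfun ((rho 0%N + rho 1%N) / Rad)).+1 + (dfun ((rho 0%N + rho 2%N) / Rad)).+1
  + (dfun ((rho 1%N + rho 0%N) / Rad)).+1 + 0 + (dfun ((rho 1%N + rho 2%N) / Rad)).+1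
  + (dfun ((rho 2%N + rho 0%N) / Rad)).+1 + (dfun ((rho 2%N + rho 1%N) / Rad)).+1 + 0)%N.
  rewrite e00 e11 e22. by repeat apply: leq_add => //.
have H24 := leq_trans hcard (leq_trans hU Hs).
move/leP: H24. rewrite -!plusE => H24.
have hn : (18 <= dfun ((rho 0%nat + rho 1%nat) / Rad) + dfun ((rho 0%nat + rho 2%nat) / Rad)
   + dfun ((rho 1%nat + rho 0%nat) / Rad) + dfun ((rho 1%nat + rho 2%nat) / Rad)
   + dfun ((rho 2%nat + rho 0%nat) / Rad) + dfun ((rho 2%nat + rho 1%nat) / Rad))%coq_nat.
  rewrite -!plusE; lia.
apply le_INR in hn. rewrite !plus_INR in hn.
have B : forall x, 0 <= x -> INR (dfun (x / Rad)) * Rad <= 17 / 2 * x.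
  move=> x hx.
  have hx' : 0 <= x / Rad by apply: Rmult_le_pos; [lra | left; apply: Rinv_0_lt_compat; lra].
  have := dfun_INR _ hx'.
  have -> : 17 / 2 * x = 17 / 2 * (x / Rad) * Rad by field; lra.
  move=> h. apply: Rmult_le_compat_r; lra.
have b01 := B (rho 0%nat + rho 1%nat) ltac:(lra).
have b02 := B (rho 0%nat + rho 2%nat) ltac:(lra).
have b10 := B (rho 1%nat + rho 0%nat) ltac:(lra).
have b12 := B (rho 1%nat + rho 2%nat) ltac:(lra).
have b20 := B (rho 2%nat + rho 0%nat) ltac:(lra).
have b21 := B (rho 2%nat + rho 1%nat) ltac:(lra).
simpl INR in hn. nra.
Qed.
End MC.

Theorem lemma6 (Rad : R) (hR : 0 < Rad) :
  (* every configuration with one radius R/2 and the other two 0 is valid *)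
  (forall (c : nat -> pt) (k : nat), (k < 3)%nat ->
     valid Rad c (fun i => if Nat.eqb i k then Rad / 2 else 0))
  /\
  (* every valid configuration has total radius at least R/2 *)
  (forall (c : nat -> pt) (rho : nat -> R),
     (forall i, (i < 3)%nat -> 0 <= rho i) ->
     valid Rad c rho ->
     rho 0%nat + rho 1%nat + rho 2%nat >= Rad / 2).
Proof.
split.
- intros c k hk p hp. exists k, k. split; [exact hk|split;[exact hk|]].
  unfold in_D, in_disk in *. rewrite Nat.eqb_refl. simpl in *.
  replace (fst (c k) - fst (c k)) with 0 by ring.
  replace (snd (c k) - snd (c k)) with 0 by ring.
  replace (Rad / 2 + Rad / 2) with Rad by field. exact hp.
- exact (MC.part2 Rad hR).
Qed.
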